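(* In the setting below (with $\eta = \tfrac1{40}$), let $A=\langle l_A,r_A\rangle$ be a special interval and let $B=\langle l_B,r_B\rangle$ be a near minimum interval such that $A$ and $B$ cross (as sets of outside atoms). Then: (1) at least one of $A\cap B$ and $A\setminus B$ is a special interval; (2) at least one of $A\cup B$ and $B\setminus A$ is a special interval.
   Context: Let $G=(V,E)$ be a multigraph with minimum cut value $k$; $\delta(S)$ is the set of edges with exactly one endpoint in $S$. For $\eta>0$, a cut $\emptyset\ne S\subsetneq V$ is an $\eta$-near minimum cut ($\eta$-NMC) if $|\delta(S)|<(1+\eta)k$ (a cut is identified with either shore). Cuts $S,T$ cross if $S\cap T,S\setminus T,T\setminus S,V\setminus(S\cup T)$ are all nonempty. A connected component $\mathcal{C}$ of $\eta$-NMCs is a connected component of the graph on $\eta$-NMCs in which crossing cuts are adjacent; its atoms $\mathcal{A}(\mathcal{C})$ form the coarsest partition of $V$ such that each cut of $\mathcal{C}$ is a union of atoms. Fix $\eta=\tfrac1{40}$ and a connected component $\mathcal{C}$ with $|\mathcal{C}|>1$, together with a polygon representation of $\mathcal{C}$ (Benczúr–Goemans): a convex regular polygon with vertices $p_0,\dots,p_{n-1}$ and a set of straight-line diagonals partitioning it into cells; each atom is mapped to a cell; atoms in cells bounded by part of the polygon boundary are outside atoms, the other atoms are inside atoms; no cell has more than one incident polygon side; each diagonal defines a cut whose two sides are the unions of atoms on the two sides of the diagonal, and the cuts so defined are exactly $\mathcal{C}$. The outside atoms are $a_0,\dots,a_{n-1}$ in counterclockwise order, $a_i$ lying on the side $(p_i,p_{i+1})$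 (indices mod $n$, $a_n=a_0$). For $S\subseteq V$, $O(S)$ is the set of outside atoms contained in $S$. For $1\le l<r\le n$, the interval $\langle l,r\rangle$ is the set $\{a_l,a_{l+1},\dots,a_{r-1}\}$. The interval $\langle l,r\rangle$ is a shadow if there is a $\tfrac15$-NMC $S$ that is a union of atoms of $\mathcal{C}$ with $O(S)=\langle l,r\rangle$; such an $S$ is known to be unique, and is called the canonical cut $\langle\langle l,r\rangle\rangle$. It is also known that two canonical cuts cross iff their intervals cross (as subsets of $\{a_0,\dots,a_{n-1}\}$). A shadow $\langle l,r\rangle$ is a near minimum interval (NMI) if $\langle\langle l,r\rangle\rangle$ is an $\eta$-NMC. A canonical cut $S$ is special if either (i) $S$ is an $\eta$-NMC, or (ii) there are two crossing canonical cuts $A',B'$, both $\eta$-NMCs, such that $S$ equals $A'\cap B'$, $A'\cup B'$, $A'\setminus B'$ or $B'\setminus A'$. An interval $\langle l,r\rangle$ is special if it is a shadow and $\langle\langle l,r\rangle\rangle$ is special. *)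

(* Defs.v *)
From Stdlib Require Import Reals.
From mathcomp Require Import all_boot.

Set Implicit Arguments.
Unset Strict Implicit.
Unset Printing Implicit Defensive.

(* A multigraph on the finite vertex type V is given by a symmetric    *)
(* multiplicity function w : V -> V -> nat (w u v = number of edges    *)
(* between u and v; loops never contribute to a cut).                   *)

Definition cutval (V : finType) (w : V -> V -> nat) (S : {set V}) : nat :=
  \sum_(u in S) \sum_(v in ~: S) w u v.

Definition proper_cut (V : finType) (S : {set V}) : bool :=
  (S != set0) && (S != setT).

Definition is_min_cut_value (V : finType) (w : V -> V -> nat) (k : nat) : Prop :=
  (forall S : {set V}, proper_cut S -> k <= cutval w S) /\
  (exists S : {set V}, proper_cut S /\ cutval w S = k).

(* S is an eta-near minimum cut, with eta = p/q (q > 0):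
   |delta(S)| < (1 + p/q) k  <->  q |delta(S)| < (q + p) k *)
Definition nmc (V : finType) (w : V -> V -> nat) (k p q : nat) (S : {set V}) : bool :=
  proper_cut S && (q * cutval w S < (q + p) * k).

Definition crosses (T : finType) (S U : {set T}) : bool :=
  [&& S :&: U != set0, S :\: U != set0, U :\: S != set0 & ~: (S :|: U) != set0].

Definition crossrel (V : finType) (w : V -> V -> nat) (k p q : nat) : rel {set V} :=
  fun S T => [&& nmc w k p q S, nmc w k p q T & crosses S T].

(* C (a set of shores, closed under complementation, i.e. each cut is
   represented by both of its shores) is a connected component of the
   graph on eta-NMCs in which crossing cuts are adjacent. *)
Definition is_nmc_component (V : finType) (w : V -> V -> nat) (k p q : nat)
    (C : {set {set V}}) : Prop :=
  exists2 S0 : {set V}, nmc w k p q S0 &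
    C = [set T | nmc w k p q T &&
                 (connect (crossrel w k p q) S0 T ||
                  connect (crossrel w k p q) S0 (~: T))].

Definition more_than_one_cut (V : finType) (C : {set {set V}}) : Prop :=
  exists S T : {set V}, [/\ S \in C, T \in C, T <> S & T <> ~: S].

Definition atom_of (V : finType) (C : {set {set V}}) (v : V) : {set V} :=
  [set u | [forall S in C, (u \in S) == (v \in S)]].

Definition atoms (V : finType) (C : {set {set V}}) : {set {set V}} :=
  [set atom_of C v | v : V].

Definition union_of_atoms (V : finType) (C : {set {set V}}) (S : {set V}) : bool :=
  [forall X in atoms C, (X \subset S) || [disjoint X & S]].

Definition vx (n j : nat) : R := cos (Rdiv (Rmult (Rmult 2 PI) (INR j)) (INR n)).
Definition vy (n j : nat) : R := sin (Rdiv (Rmult (Rmult 2 PI) (INR j)) (INR n)).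

(* Orientation (cross product) of the point q w.r.t. the directed line
   p_s -> p_t: positive = to the left, negative = to the right. *)
Definition orient (n s t : nat) (q : R * R) : R :=
  Rminus (Rmult (Rminus (vx n t) (vx n s)) (Rminus (snd q) (vy n s)))
         (Rmult (Rminus (vy n t) (vy n s)) (Rminus (fst q) (vx n s))).

Definition inside_polygon (n : nat) (q : R * R) : Prop :=
  forall i : 'I_n, Rlt 0 (orient n i i.+1 q).

Definition rltb (x y : R) : bool := if Rlt_dec x y then true else false.

(* For a diagonal d = (p_s, p_t) with s < t, the side of d containing the
   polygon sides (p_s,p_{s+1}), ..., (p_{t-1},p_t) is the region strictly
   to the right of the directed chord p_s -> p_t. *)
Definition on_low_side (n : nat) (d : 'I_n * 'I_n) (q : R * R) : bool :=
  rltb (orient n d.1 d.2 q) R0.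

Definition diag_cut (V : finType) (C : {set {set V}}) (n : nat)
    (pos : {set V} -> R * R) (d : 'I_n * 'I_n) : {set V} :=
  \bigcup_(X in atoms C | @on_low_side n d (pos X)) X.

(* The point q lies in the cell incident to the polygon side
   (p_i, p_{i+1}): it is on the same side as that polygon side of every
   diagonal. *)
Definition in_side_cell (n : nat) (D : {set 'I_n * 'I_n}) (q : R * R) (i : 'I_n) : Prop :=
  forall d, d \in D -> (@on_low_side n d q <-> (d.1 <= i < d.2)).

(* Polygon representation of C: n polygon vertices, a set D of diagonals
   (pairs s < t of non-adjacent polygon vertices), an assignment pos of a
   point (in the interior of its cell) to every atom, and the outside
   atoms a_0, ..., a_{n-1}, a_i lying on the side (p_i, p_{i+1}). *)
Definition polygon_rep (V : finType) (C : {set {set V}}) (n : nat)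
    (D : {set 'I_n * 'I_n}) (pos : {set V} -> R * R) (a : 'I_n -> {set V}) : Prop :=
  [/\ 3 <= n,
      (* genuine straight-line diagonals (not sides) *)
      (forall d, d \in D ->
         [/\ d.1 < d.2, d.1.+1 < d.2 & ~~ ((d.1 == 0 :> nat) && (d.2 == n.-1 :> nat))]),
      (* each atom is mapped to a cell: a point of the open polygon lying on
         no diagonal *)
      (forall X, X \in atoms C ->
         inside_polygon n (pos X) /\
         (forall d, d \in D -> orient n d.1 d.2 (pos X) <> R0)),
      (* the outside atoms are exactly a_0, ..., a_{n-1}, a_i being the atom
         in the cell incident to the side (p_i, p_{i+1}); all other atoms are
         inside atoms *)
      (forall i, a i \in atoms C) /\
      (forall X i, X \in atoms C -> (@in_side_cell n D (pos X) i <-> X = a i)) /\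
      (* no cell has more than one incident polygon side *)
      (forall i j : 'I_n, i != j ->
         exists2 d, d \in D & (d.1 <= i < d.2) != (d.1 <= j < d.2))
    &
      (forall T : {set V}, T \in C <->
         exists2 d, d \in D & T = diag_cut C pos d \/ T = ~: diag_cut C pos d)].

(* intervals.  Outside atoms are referred to by their index in 'I_n.   *)

Definition outside_in (V : finType) (n : nat) (a : 'I_n -> {set V}) (S : {set V}) : {set 'I_n} :=
  [set i : 'I_n | a i \subset S].

Definition interval (n l r : nat) : {set 'I_n} := [set i : 'I_n | l <= i < r].

Definition valid_lr (n l r : nat) : bool := (1 <= l) && (l < r) && (r <= n).

Definition canonical_for (V : finType) (w : V -> V -> nat) (k : nat)
    (C : {set {set V}}) (n : nat) (a : 'I_n -> {set V}) (S : {set V}) (l r : nat) : Prop :=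
  [/\ nmc w k 1 5 S, union_of_atoms C S & outside_in a S = interval n l r].

Definition shadow V w k C n a (l r : nat) : Prop :=
  valid_lr n l r /\ exists S : {set V}, @canonical_for V w k C n a S l r.

Definition is_canonical V w k C n a (S : {set V}) : Prop :=
  exists l r, valid_lr n l r /\ @canonical_for V w k C n a S l r.

Definition special_cut V w k C n a (S : {set V}) : Prop :=
  nmc w k 1 40 S \/
  exists A' B' : {set V},
    [/\ @is_canonical V w k C n a A', @is_canonical V w k C n a B',
        nmc w k 1 40 A' && nmc w k 1 40 B', crosses A' B' &
        (S = A' :&: B' \/ S = A' :|: B' \/ S = A' :\: B' \/ S = B' :\: A')].

(* <l, r> is special: it is a shadow and its canonical cut <<l, r>> is
   special (the canonical cut is unique; we quantify existentially). *)
Definition special_interval V w k C n a (l r : nat) : Prop :=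
  valid_lr n l r /\
  exists S : {set V}, @canonical_for V w k C n a S l r /\ @special_cut V w k C n a S.

Definition NMI V w k C n a (l r : nat) : Prop :=
  valid_lr n l r /\
  exists S : {set V}, @canonical_for V w k C n a S l r /\ nmc w k 1 40 S.

Definition special_iset V w k C n a (I : {set 'I_n}) : Prop :=
  exists l r, I = interval n l r /\ @special_interval V w k C n a l r.

(* Main.v *)
Require Import Defs.
From Stdlib Require Import Reals.
From mathcomp Require Import all_boot.
From mathcomp Require Import zify.

Set Implicit Arguments.
Unset Strict Implicit.
Unset Printing Implicit Defensive.

Section Cuts.
Variables (V : finType) (w : V -> V -> nat).
Hypothesis wsym : forall u v, w u v = w v u.

Lemma cutvalE (S : {set V}) :
  cutval w S = \sum_u \sum_v (((u \in S) && (v \notin S)) * w u v).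
Proof.
rewrite /cutval big_mkcond /=; apply: eq_bigr => u _.
case: (u \in S) => /=; last by rewrite big1 // => v _; rewrite mul0n.
rewrite big_mkcond /=; apply: eq_bigr => v _; rewrite inE.
by case: (v \in S) => /=; rewrite ?mul1n ?mul0n.
Qed.

Lemma submod (X Y : {set V}) :
  cutval w (X :&: Y) + cutval w (X :|: Y) <= cutval w X + cutval w Y.
Proof.
rewrite !cutvalE -!big_split /=; apply: leq_sum => u _.
rewrite -!big_split /=; apply: leq_sum => v _; rewrite !inE.
case: (u \in X); case: (u \in Y); case: (v \in X); case: (v \in Y) => /=;
  rewrite ?mul0n ?mul1n ?addn0 ?add0n //; lia.
Qed.

Lemma cutvalC (S : {set V}) : cutval w (~: S) = cutval w S.
Proof.
rewrite !cutvalE exchange_big /=; apply: eq_bigr => u _; apply: eq_bigr => v _.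
by rewrite !inE negbK andbC wsym.
Qed.

Lemma posimod (X Y : {set V}) :
  cutval w (X :\: Y) + cutval w (Y :\: X) <= cutval w X + cutval w Y.
Proof.
have := submod X (~: Y); rewrite cutvalC.
have -> : X :&: ~: Y = X :\: Y by apply/setP => x; rewrite !inE andbC.
have -> : X :|: ~: Y = ~: (Y :\: X).
  by apply/setP => x; rewrite !inE; case: (x \in X); case: (x \in Y).
by rewrite cutvalC.
Qed.
End Cuts.
Section Atoms.
Variables (V : finType) (C : {set {set V}}).

Lemma atom_ne X : X \in atoms C -> X != set0.
Proof.
case/imsetP => v _ ->; apply/set0Pn; exists v; rewrite inE.
by apply/forallP => S; apply/implyP.
Qed.

Lemma uoaP S : union_of_atoms C S <->
  forall Z, Z \in atoms C -> forall x y, x \in Z -> y \in Z -> (x \in S) = (y \in S).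
Proof.
split.
  move/forallP => H Z HZ x y xZ yZ; move: (H Z); rewrite HZ /=; case/orP.
    by move/subsetP => sub; rewrite (sub x xZ) (sub y yZ).
  by move=> dj; rewrite (disjointFr dj xZ) (disjointFr dj yZ).
move=> H; apply/forallP => Z; apply/implyP => HZ.
case/set0Pn: (atom_ne HZ) => x xZ.
case xS: (x \in S).
  apply/orP; left; apply/subsetP => y yZ; by rewrite -(H Z HZ x y xZ yZ).
apply/orP; right; rewrite disjoint_subset; apply/subsetP => y yZ.
by rewrite inE /= -(H Z HZ x y xZ yZ) xS.
Qed.

Lemma uoa_split S Z : union_of_atoms C S -> Z \in atoms C ->
  (Z \subset S) \/ [disjoint Z & S].
Proof. by move/forallP => H HZ; move: (H Z); rewrite HZ /= => /orP. Qed.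

Lemma uoaI X Y : union_of_atoms C X -> union_of_atoms C Y -> union_of_atoms C (X :&: Y).
Proof.
move=> /uoaP HX /uoaP HY; apply/uoaP => Z HZ x y xZ yZ.
by rewrite !inE (HX Z HZ x y xZ yZ) (HY Z HZ x y xZ yZ).
Qed.
Lemma uoaU X Y : union_of_atoms C X -> union_of_atoms C Y -> union_of_atoms C (X :|: Y).
Proof.
move=> /uoaP HX /uoaP HY; apply/uoaP => Z HZ x y xZ yZ.
by rewrite !inE (HX Z HZ x y xZ yZ) (HY Z HZ x y xZ yZ).
Qed.
Lemma uoaD X Y : union_of_atoms C X -> union_of_atoms C Y -> union_of_atoms C (X :\: Y).
Proof.
move=> /uoaP HX /uoaP HY; apply/uoaP => Z HZ x y xZ yZ.
by rewrite !inE (HX Z HZ x y xZ yZ) (HY Z HZ x y xZ yZ).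
Qed.

Variables (n : nat) (a : 'I_n -> {set V}).
Hypothesis Ha : forall i, a i \in atoms C.

Lemma O_I X Y : outside_in a (X :&: Y) = outside_in a X :&: outside_in a Y.
Proof. by apply/setP => i; rewrite !inE subsetI. Qed.

Lemma O_U X Y : union_of_atoms C X -> union_of_atoms C Y ->
  outside_in a (X :|: Y) = outside_in a X :|: outside_in a Y.
Proof.
move=> HX HY; apply/setP => i; rewrite !inE.
apply/idP/idP; last first.
  by case/orP => H; apply: (subset_trans H); [exact: subsetUl | exact: subsetUr].
move=> H; case: (uoa_split HX (Ha i)) => [->//|dj]; apply/orP; right.
apply/subsetP => x xa; move: (subsetP H x xa); rewrite inE (disjointFr dj xa) //.
Qed.

Lemma O_D X Y : union_of_atoms C Y ->
  outside_in a (X :\: Y) = outside_in a X :\: outside_in a Y.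
Proof.
move=> HY; apply/setP => i; rewrite !inE.
apply/idP/idP.
  move=> H; case/set0Pn: (atom_ne (Ha i)) => x xa.
  have := subsetP H x xa; rewrite inE => /andP [xY xX].
  rewrite (subset_trans H (subsetDl _ _)) andbT; apply/negP => /subsetP/(_ x xa).
  by rewrite (negbTE xY).
case/andP => nY HX; case: (uoa_split HY (Ha i)) => [sY|dj]; first by rewrite sY in nY.
apply/subsetP => x xa; by rewrite inE (disjointFr dj xa) (subsetP HX x xa).
Qed.
End Atoms.

Lemma ne_sub (T : finType) (A B : {set T}) : A != set0 -> A \subset B -> B != set0.
Proof. by case/set0Pn => x xA /subsetP/(_ x xA) xB; apply/set0Pn; exists x. Qed.

Lemma proper_of (T : finType) (S : {set T}) : S != set0 -> ~: S != set0 -> proper_cut S.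
Proof.
move=> H1 H2; rewrite /proper_cut H1 /=; apply: contra H2 => /eqP ->.
by rewrite setCT.
Qed.

Lemma crossesC (T : finType) (X Y : {set T}) : crosses X Y = crosses Y X.
Proof.
rewrite /crosses setIC setUC.
by case: (Y :&: X != set0); case: (X :\: Y != set0); case: (Y :\: X != set0).
Qed.

Lemma cross_props (T : finType) (X Y : {set T}) : crosses X Y ->
  [/\ proper_cut (X :&: Y), proper_cut (X :|: Y), proper_cut (X :\: Y) & proper_cut (Y :\: X)].
Proof.
case/and4P => h1 h2 h3 h4; split; apply: proper_of => //.
- by apply: ne_sub h2 _; apply/subsetP => x; rewrite !inE; case: (x \in X); case: (x \in Y).
- by apply: ne_sub h1 _; apply/subsetP => x; rewrite !inE; case: (x \in X); case: (x \in Y).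
- by apply: ne_sub h3 _; apply/subsetP => x; rewrite !inE; case: (x \in X); case: (x \in Y).
- by apply: ne_sub h2 _; apply/subsetP => x; rewrite !inE; case: (x \in X); case: (x \in Y).
Qed.

Section Main.
Variables (V : finType) (w : V -> V -> nat) (k : nat) (C : {set {set V}})
  (n : nat) (a : 'I_n -> {set V}).
Hypothesis wsym : forall u v, w u v = w v u.
Hypothesis Hk : is_min_cut_value w k.
Hypothesis Ha : forall i, a i \in atoms C.
Hypothesis Hn : 0 < n.

Definition N X := is_canonical w k C a X /\ nmc w k 1 40 X.
Definition good (T : {set 'I_n}) := exists S, [/\ nmc w k 1 5 S, union_of_atoms C S,
  outside_in a S = T & special_cut w k C a S].

Lemma kle S : proper_cut S -> k <= cutval w S.
Proof. by case: Hk => H _; apply: H. Qed.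

Lemma nmc5 S : nmc w k 1 40 S -> nmc w k 1 5 S.
Proof. by rewrite /nmc => /andP [-> H] /=; lia. Qed.

Lemma nmcI X Y : crosses X Y -> nmc w k 1 40 X -> nmc w k 1 40 Y -> nmc w k 1 5 (X :&: Y).
Proof.
move=> cr /andP [_ hX] /andP [_ hY]; case: (cross_props cr) => p1 p2 _ _.
rewrite /nmc p1 /=; have := submod w X Y; have := kle p2; lia.
Qed.
Lemma nmcU X Y : crosses X Y -> nmc w k 1 40 X -> nmc w k 1 40 Y -> nmc w k 1 5 (X :|: Y).
Proof.
move=> cr /andP [_ hX] /andP [_ hY]; case: (cross_props cr) => p1 p2 _ _.
rewrite /nmc p2 /=; have := submod w X Y; have := kle p1; lia.
Qed.
Lemma nmcD X Y : crosses X Y -> nmc w k 1 40 X -> nmc w k 1 40 Y -> nmc w k 1 5 (X :\: Y).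
Proof.
move=> cr /andP [_ hX] /andP [_ hY]; case: (cross_props cr) => _ _ p3 p4.
rewrite /nmc p3 /=; have := posimod wsym X Y; have := kle p4; lia.
Qed.

Lemma N_uoa X : N X -> union_of_atoms C X.
Proof. by case=> [[l [r [_ [_ ? _]]]] _]. Qed.

Lemma g1 X T : N X -> outside_in a X = T -> good T.
Proof. by move=> NX <-; exists X; split; [apply: nmc5; case: NX|apply: N_uoa| |left; case: NX]. Qed.

Lemma gI X Y T : N X -> N Y -> crosses X Y -> outside_in a (X :&: Y) = T -> good T.
Proof.
move=> NX NY cr <-; exists (X :&: Y); split => //.
- by apply: nmcI => //; [case: NX|case: NY].
- by apply: uoaI; apply: N_uoa.
- right; exists X, Y; split; [by case: NX|by case: NY| |exact: cr|by left].
  by case: NX => _ ->; case: NY => _ ->.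
Qed.

Lemma gU X Y T : N X -> N Y -> crosses X Y -> outside_in a (X :|: Y) = T -> good T.
Proof.
move=> NX NY cr <-; exists (X :|: Y); split => //.
- by apply: nmcU => //; [case: NX|case: NY].
- by apply: uoaU; apply: N_uoa.
- right; exists X, Y; split; [by case: NX|by case: NY| |exact: cr|by right; left].
  by case: NX => _ ->; case: NY => _ ->.
Qed.

Lemma gD X Y T : N X -> N Y -> crosses X Y -> outside_in a (X :\: Y) = T -> good T.
Proof.
move=> NX NY cr <-; exists (X :\: Y); split => //.
- by apply: nmcD => //; [case: NX|case: NY].
- by apply: uoaD; apply: N_uoa.
- right; exists X, Y; split; [by case: NX|by case: NY| |exact: cr|by right; right; left].
  by case: NX => _ ->; case: NY => _ ->.
Qed.

Lemma Oint X : N X -> exists l r, valid_lr n l r /\ outside_in a X = interval n l r.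
Proof. by case=> [[l [r [v [_ _ E]]]] _]; exists l, r. Qed.

Lemma memO X l r m (Hm : m < n) : outside_in a X = interval n l r ->
  (a (Ordinal Hm) \subset X) = (l <= m < r).
Proof. by move=> E; have := f_equal (fun T : {set 'I_n} => Ordinal Hm \in T) E; rewrite !inE. Qed.

Lemma cross_mk X Y : N X -> N Y -> X :&: Y != set0 -> X :\: Y != set0 ->
  Y :\: X != set0 -> crosses X Y.
Proof.
move=> NX NY h1 h2 h3; rewrite /crosses h1 h2 h3 /=.
case: (Oint NX) => lx [rx [/andP [/andP [vx _] _] EX]].
case: (Oint NY) => ly [ry [/andP [/andP [vy _] _] EY]].
have nX : ~~ (a (Ordinal Hn) \subset X) by rewrite (memO _ EX); lia.
have nY : ~~ (a (Ordinal Hn) \subset Y) by rewrite (memO _ EY); lia.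
case: (uoa_split (N_uoa NX) (Ha (Ordinal Hn))) => [s|dX]; first by rewrite s in nX.
case: (uoa_split (N_uoa NY) (Ha (Ordinal Hn))) => [s|dY]; first by rewrite s in nY.
case/set0Pn: (atom_ne (Ha (Ordinal Hn))) => x xa; apply/set0Pn; exists x.
by rewrite !inE (disjointFr dX xa) (disjointFr dY xa).
Qed.

Lemma neI X Y lx rx ly ry m : outside_in a X = interval n lx rx ->
  outside_in a Y = interval n ly ry -> m < n -> lx <= m < rx -> ly <= m < ry ->
  X :&: Y != set0.
Proof.
move=> EX EY Hm h1 h2.
have sX : a (Ordinal Hm) \subset X by rewrite (memO _ EX).
have sY : a (Ordinal Hm) \subset Y by rewrite (memO _ EY).
case/set0Pn: (atom_ne (Ha (Ordinal Hm))) => x xa; apply/set0Pn; exists x.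
by rewrite inE (subsetP sX x xa) (subsetP sY x xa).
Qed.

Lemma neD X Y lx rx ly ry m : N Y -> outside_in a X = interval n lx rx ->
  outside_in a Y = interval n ly ry -> m < n -> lx <= m < rx -> ~~ (ly <= m < ry) ->
  X :\: Y != set0.
Proof.
move=> NY EX EY Hm h1 h2.
have sX : a (Ordinal Hm) \subset X by rewrite (memO _ EX).
have sY : ~~ (a (Ordinal Hm) \subset Y) by rewrite (memO _ EY).
case: (uoa_split (N_uoa NY) (Ha (Ordinal Hm))) => [s|dY]; first by rewrite s in sY.
case/set0Pn: (atom_ne (Ha (Ordinal Hm))) => x xa; apply/set0Pn; exists x.
by rewrite inE (subsetP sX x xa) (disjointFr dY xa).
Qed.

Lemma crossI X Y lx rx ly ry : N X -> N Y -> outside_in a X = interval n lx rx ->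
  outside_in a Y = interval n ly ry -> lx < ly -> ly < rx -> rx < ry -> ry <= n ->
  crosses X Y.
Proof.
move=> NX NY EX EY h1 h2 h3 h4; apply: cross_mk => //.
- by apply: (@neI _ _ lx rx ly ry ly) => //; lia.
- by apply: (@neD _ _ lx rx ly ry lx) => //; lia.
- by apply: (@neD _ _ ly ry lx rx rx) => //; lia.
Qed.

Lemma gIp X Y lx rx ly ry (T : {set 'I_n}) : N X -> N Y -> crosses X Y ->
  outside_in a X = interval n lx rx -> outside_in a Y = interval n ly ry ->
  (forall i : 'I_n, (i \in T) = ((lx <= i < rx) && (ly <= i < ry))) -> good T.
Proof.
move=> NX NY cr EX EY ET; apply: (gI NX NY cr).
by rewrite O_I EX EY; apply/setP => i; rewrite ET !inE.
Qed.
Lemma gUp X Y lx rx ly ry (T : {set 'I_n}) : N X -> N Y -> crosses X Y ->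
  outside_in a X = interval n lx rx -> outside_in a Y = interval n ly ry ->
  (forall i : 'I_n, (i \in T) = ((lx <= i < rx) || (ly <= i < ry))) -> good T.
Proof.
move=> NX NY cr EX EY ET; apply: (gU NX NY cr).
rewrite (O_U Ha (N_uoa NX) (N_uoa NY)) EX EY.
by apply/setP => i; rewrite ET !inE.
Qed.
Lemma gDp X Y lx rx ly ry (T : {set 'I_n}) : N X -> N Y -> crosses X Y ->
  outside_in a X = interval n lx rx -> outside_in a Y = interval n ly ry ->
  (forall i : 'I_n, (i \in T) = ((lx <= i < rx) && ~~ (ly <= i < ry))) -> good T.
Proof.
move=> NX NY cr EX EY ET; apply: (gD NX NY cr).
rewrite (@O_D _ _ _ _ Ha X Y (N_uoa NY)) EX EY.
by apply/setP => i; rewrite ET !inE andbC.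
Qed.
Lemma g1p X lx rx (T : {set 'I_n}) : N X -> outside_in a X = interval n lx rx ->
  (forall i : 'I_n, (i \in T) = (lx <= i < rx)) -> good T.
Proof. by move=> NX EX ET; apply: (g1 NX); rewrite EX; apply/setP => i; rewrite ET inE. Qed.

Definition concl lA rA lB rB :=
  (good (interval n lA rA :&: interval n lB rB) \/ good (interval n lA rA :\: interval n lB rB)) /\
  (good (interval n lA rA :|: interval n lB rB) \/ good (interval n lB rB :\: interval n lA rA)).

Ltac fin := move=> i; rewrite !inE; lia.
Ltac ptd E m := move: (E m ltac:(lia)) => ?.
Ltac pt E m := let h := fresh "h" in case: (ltnP m n) => h; [move: (E m h) => ?|].

Lemma crI_sub (X Y Z : {set V}) : crosses X Y -> Y \subset Z -> X :&: Z != set0.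
Proof. by case/and4P => h _ _ _ s; apply: ne_sub h _; apply: setIS. Qed.
Lemma crI_sub2 (X Y Z : {set V}) : crosses X Y -> X \subset Z -> Y :&: Z != set0.
Proof. by case/and4P => h _ _ _ s; apply: ne_sub h _; rewrite setIC; apply: setIS. Qed.
Lemma nsub_ne (A B : {set V}) : ~~ (A \subset B) -> A :\: B != set0.
Proof. by rewrite -setD_eq0. Qed.

Lemma cr_contra (X Y Z : {set V}) : crosses X Y -> Y \subset Z -> Z \subset X -> False.
Proof.
case/and4P => _ _ h _ s1 s2; move: h; rewrite setD_eq0 => /negP; apply.
exact: subset_trans s1 s2.
Qed.

Section Core.
Variables (SB : {set V}) (lA rA lB rB : nat).
Hypothesis HSB : N SB.
Hypothesis ESB : outside_in a SB = interval n lB rB.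
Hypothesis vA : valid_lr n lA rA.
Hypothesis vB : valid_lr n lB rB.
Hypothesis Hor : (lA < lB /\ lB < rA /\ rA < rB) \/ (lB < lA /\ lA < rB /\ rB < rA).

Lemma case1 L : N L -> outside_in a L = interval n lA rA -> concl lA rA lB rB.
Proof.
move=> NL EL; move: vA vB; rewrite /valid_lr => va vb.
case: Hor => h; split; [left|left|left|left].
- apply: (gIp NL HSB _ EL ESB); last by fin.
  by apply: (crossI NL HSB EL ESB); lia.
- apply: (gUp NL HSB _ EL ESB); last by fin.
  by apply: (crossI NL HSB EL ESB); lia.
- apply: (gIp NL HSB _ EL ESB); last by fin.
  by rewrite crossesC; apply: (crossI HSB NL ESB EL); lia.
- apply: (gUp NL HSB _ EL ESB); last by fin.
  by rewrite crossesC; apply: (crossI HSB NL ESB EL); lia.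
Qed.

Lemma interL L l r : N L -> outside_in a L = interval n l r -> valid_lr n l r ->
  ((lA < lB /\ lB < rA /\ rA < rB) /\ r = rA /\ l <= lA) \/
  ((lB < lA /\ lA < rB /\ rB < rA) /\ l = lA /\ rA <= r) ->
  good (interval n lA rA :&: interval n lB rB) /\ good (interval n lB rB :\: interval n lA rA).
Proof.
move=> NL EL vL; move: vA vB vL; rewrite /valid_lr => va vb vl.
case=> h; split.
- apply: (gIp NL HSB _ EL ESB); last by fin.
  by apply: (crossI NL HSB EL ESB); lia.
- apply: (gDp HSB NL _ ESB EL); last by fin.
  by rewrite crossesC; apply: (crossI NL HSB EL ESB); lia.
- apply: (gIp NL HSB _ EL ESB); last by fin.
  by rewrite crossesC; apply: (crossI HSB NL ESB EL); lia.
- apply: (gDp HSB NL _ ESB EL); last by fin.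
  by apply: (crossI HSB NL ESB EL); lia.
Qed.

Lemma core_inter X Y : N X -> N Y -> outside_in a (X :&: Y) = interval n lA rA ->
  concl lA rA lB rB.
Proof.
move=> NX NY HI.
case: (Oint NX) => a1 [a2 [vX EX]]; case: (Oint NY) => b1 [b2 [vY EY]].
rewrite O_I EX EY in HI.
have E : forall m, m < n -> ((a1 <= m < a2) && (b1 <= m < b2)) = (lA <= m < rA).
  by move=> m Hm; have := f_equal (fun T : {set 'I_n} => Ordinal Hm \in T) HI; rewrite !inE.
move: (vA) (vB) (vX) (vY); rewrite /valid_lr => va vb vx vy.
have F : a1 <= lA /\ b1 <= lA /\ rA <= a2 /\ rA <= b2 /\
   (a1 = lA \/ b1 = lA) /\ (a2 = rA \/ b2 = rA).
  have d1 : a1 <= lA < a2 /\ b1 <= lA < b2 by have := E lA ltac:(lia); lia.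
  have d2 : a1 = lA \/ b1 = lA by have := E (lA - 1) ltac:(lia); lia.
  have d3 : rA <= a2 /\ rA <= b2 by have := E (rA - 1) ltac:(lia); lia.
  have d4 : rA < n -> a2 <= rA \/ b2 <= rA.
    by move=> hh; have := E rA hh; lia.
  clear E; lia.
case: F => f1 [f2 [f3 [f4 [f5 f6]]]].
have HX := interL NX EX vX; have HY := interL NY EY vY.
suff [G1 G2] : good (interval n lA rA :&: interval n lB rB) /\
   good (interval n lB rB :\: interval n lA rA) by split; [left|right].
case: Hor => h.
  case: f6 => f6; [apply: HX|apply: HY]; left; lia.
case: f5 => f5; [apply: HX|apply: HY]; right; lia.
Qed.

Lemma unionW X Y a1 a2 b1 b2 : N X -> N Y -> crosses X Y ->
  outside_in a X = interval n a1 a2 -> outside_in a Y = interval n b1 b2 ->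
  valid_lr n a1 a2 -> valid_lr n b1 b2 ->
  a1 = lA -> b2 = rA -> a2 < rA -> lA < b1 -> b1 <= a2 -> concl lA rA lB rB.
Proof.
move=> NX NY cr EX EY; move: vA vB; rewrite /valid_lr => va vb vx vy e1 e2 e3 e4 e5.
case: Hor => h; split.
- case: (ltnP lB a2) => c1.
    by right; apply: (gDp NX HSB _ EX ESB); [apply: (crossI NX HSB EX ESB); lia|fin].
  case: (ltnP b1 lB) => c2.
    by left; apply: (gIp NY HSB _ EY ESB); [apply: (crossI NY HSB EY ESB); lia|fin].
  by left; apply: (g1p NY EY); fin.
- case: (ltnP b1 lB) => c2.
    right; apply: (gDp HSB NY _ ESB EY); last by fin.
    by rewrite crossesC; apply: (crossI NY HSB EY ESB); lia.
  case: (ltnP lB a2) => c1.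
    by left; apply: (gUp NX HSB _ EX ESB); [apply: (crossI NX HSB EX ESB); lia|fin].
  case sYS: (Y \subset SB).
    left; apply: (gUp NX HSB _ EX ESB); last by fin.
    apply: cross_mk => //; first exact: (crI_sub cr sYS).
    - by apply: (@neD _ _ a1 a2 lB rB lA) => //; lia.
    - by apply: (@neD _ _ lB rB a1 a2 lB) => //; lia.
  right; apply: (gDp HSB NY _ ESB EY); last by fin.
  apply: cross_mk => //.
  - by apply: (@neI _ _ lB rB b1 b2 lB) => //; lia.
  - by apply: (@neD _ _ lB rB b1 b2 rA) => //; lia.
  - by apply: nsub_ne; rewrite sYS.
- case: (ltnP rB a2) => c1.
    left; apply: (gIp NX HSB _ EX ESB); last by fin.
    by rewrite crossesC; apply: (crossI HSB NX ESB EX); lia.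
  case: (ltnP b1 rB) => c2.
    right; apply: (gDp NY HSB _ EY ESB); last by fin.
    by rewrite crossesC; apply: (crossI HSB NY ESB EY); lia.
  by left; apply: (g1p NX EX); fin.
- case: (ltnP rB a2) => c1.
    by right; apply: (gDp HSB NX _ ESB EX); [apply: (crossI HSB NX ESB EX); lia|fin].
  case: (ltnP b1 rB) => c2.
    left; apply: (gUp NY HSB _ EY ESB); last by fin.
    by rewrite crossesC; apply: (crossI HSB NY ESB EY); lia.
  case sXS: (X \subset SB).
    left; apply: (gUp NY HSB _ EY ESB); last by fin.
    apply: cross_mk => //; first exact: (crI_sub2 cr sXS).
    - by apply: (@neD _ _ b1 b2 lB rB rB) => //; lia.
    - by apply: (@neD _ _ lB rB b1 b2 lB) => //; lia.
  right; apply: (gDp HSB NX _ ESB EX); last by fin.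
  apply: cross_mk => //.
  - by apply: (@neI _ _ lB rB a1 a2 lA) => //; lia.
  - by apply: (@neD _ _ lB rB a1 a2 lB) => //; lia.
  - by apply: nsub_ne; rewrite sXS.
Qed.

Lemma core_union X Y : N X -> N Y -> crosses X Y ->
  outside_in a (X :|: Y) = interval n lA rA -> concl lA rA lB rB.
Proof.
move=> NX NY cr HI.
case: (Oint NX) => a1 [a2 [vX EX]]; case: (Oint NY) => b1 [b2 [vY EY]].
rewrite (O_U Ha (N_uoa NX) (N_uoa NY)) EX EY in HI.
have E : forall m, m < n -> ((a1 <= m < a2) || (b1 <= m < b2)) = (lA <= m < rA).
  by move=> m Hm; have := f_equal (fun T : {set 'I_n} => Ordinal Hm \in T) HI; rewrite !inE.
move: (vA) (vB) (vX) (vY); rewrite /valid_lr => va vb vx vy.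
have F : (a1 = lA /\ a2 = rA) \/ (b1 = lA /\ b2 = rA) \/
   (a1 = lA /\ b2 = rA /\ a2 < rA /\ lA < b1 /\ b1 <= a2) \/
   (b1 = lA /\ a2 = rA /\ b2 < rA /\ lA < a1 /\ a1 <= b2).
  have g1 : lA <= a1 < rA by have := E a1 ltac:(lia); lia.
  have g2 : lA <= b1 < rA by have := E b1 ltac:(lia); lia.
  have g3 : lA < a2 <= rA by have := E (a2 - 1) ltac:(lia); lia.
  have g4 : lA < b2 <= rA by have := E (b2 - 1) ltac:(lia); lia.
  have g5 : a1 = lA \/ b1 = lA by have := E lA ltac:(lia); lia.
  have g6 : a2 = rA \/ b2 = rA by have := E (rA - 1) ltac:(lia); lia.
  have g7 : b1 <= a2.
    case: (leqP b1 a2) => // hh; have := E a2 ltac:(lia); lia.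
  have g8 : a1 <= b2.
    case: (leqP a1 b2) => // hh; have := E b2 ltac:(lia); lia.
  clear E; lia.
case: F => [[f1 f2]|[[f1 f2]|[[f1 [f2 [f3 [f4 f5]]]]|[f1 [f2 [f3 [f4 f5]]]]]]].
- by apply: (case1 NX); rewrite EX f1 f2.
- by apply: (case1 NY); rewrite EY f1 f2.
- exact: (unionW NX NY cr EX EY).
- by apply: (unionW NY NX _ EY EX) => //; rewrite crossesC.
Qed.

Lemma diffB X Y a1 a2 b1 b2 : N X -> N Y -> crosses X Y ->
  outside_in a X = interval n a1 a2 -> outside_in a Y = interval n b1 b2 ->
  valid_lr n a1 a2 -> valid_lr n b1 b2 ->
  lA = b2 -> rA = a2 -> b1 <= a1 -> a1 < b2 -> concl lA rA lB rB.
Proof.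
move=> NX NY cr EX EY; move: vA vB; rewrite /valid_lr => va vb vx vy e1 e2 e3 e4.
case: Hor => h; split.
- by left; apply: (gIp NX HSB _ EX ESB); [apply: (crossI NX HSB EX ESB); lia|fin].
- right; apply: (gDp HSB NX _ ESB EX); last by fin.
  by rewrite crossesC; apply: (crossI NX HSB EX ESB); lia.
- case: (ltnP lB a1) => c1.
    right; apply: (gDp NX HSB _ EX ESB); last by fin.
    by rewrite crossesC; apply: (crossI HSB NX ESB EX); lia.
  case: (ltnP b1 lB) => c2.
    left; apply: (gDp HSB NY _ ESB EY); last by fin.
    by rewrite crossesC; apply: (crossI NY HSB EY ESB); lia.
  case sYS: (Y \subset SB); last first.
    left; apply: (gDp HSB NY _ ESB EY); last by fin.
    apply: cross_mk => //.
    - by apply: (@neI _ _ lB rB b1 b2 lB) => //; lia.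
    - by apply: (@neD _ _ lB rB b1 b2 b2) => //; lia.
    - by apply: nsub_ne; rewrite sYS.
  case sSX: (SB \subset X); first by case: (cr_contra cr sYS sSX).
  right; apply: (gDp NX HSB _ EX ESB); last by fin.
  apply: cross_mk => //.
  - by apply: (@neI _ _ a1 a2 lB rB lB) => //; lia.
  - by apply: (@neD _ _ a1 a2 lB rB rB) => //; lia.
  - by apply: nsub_ne; rewrite sSX.
- case: (ltnP lB a1) => c1.
    left; apply: (gUp NX HSB _ EX ESB); last by fin.
    by rewrite crossesC; apply: (crossI HSB NX ESB EX); lia.
  case: (ltnP b1 lB) => c2.
    right; apply: (gIp HSB NY _ ESB EY); last by fin.
    by rewrite crossesC; apply: (crossI NY HSB EY ESB); lia.
  by left; apply: (g1p NX EX); fin.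
Qed.

Lemma diffC X Y a1 a2 b1 b2 : N X -> N Y -> crosses X Y ->
  outside_in a X = interval n a1 a2 -> outside_in a Y = interval n b1 b2 ->
  valid_lr n a1 a2 -> valid_lr n b1 b2 ->
  lA = a1 -> rA = b1 -> b1 < a2 -> a2 <= b2 -> concl lA rA lB rB.
Proof.
move=> NX NY cr EX EY; move: vA vB; rewrite /valid_lr => va vb vx vy e1 e2 e3 e4.
case: Hor => h; split.
- case: (ltnP a2 rB) => c1.
    by right; apply: (gDp NX HSB _ EX ESB); [apply: (crossI NX HSB EX ESB); lia|fin].
  case: (ltnP rB b2) => c2.
    by left; apply: (gDp HSB NY _ ESB EY); [apply: (crossI HSB NY ESB EY); lia|fin].
  case sYS: (Y \subset SB); last first.
    left; apply: (gDp HSB NY _ ESB EY); last by fin.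
    apply: cross_mk => //.
    - by apply: (@neI _ _ lB rB b1 b2 b1) => //; lia.
    - by apply: (@neD _ _ lB rB b1 b2 lB) => //; lia.
    - by apply: nsub_ne; rewrite sYS.
  case sSX: (SB \subset X); first by case: (cr_contra cr sYS sSX).
  right; apply: (gDp NX HSB _ EX ESB); last by fin.
  apply: cross_mk => //.
  - by apply: (@neI _ _ a1 a2 lB rB lB) => //; lia.
  - by apply: (@neD _ _ a1 a2 lB rB a1) => //; lia.
  - by apply: nsub_ne; rewrite sSX.
- case: (ltnP a2 rB) => c1.
    by left; apply: (gUp NX HSB _ EX ESB); [apply: (crossI NX HSB EX ESB); lia|fin].
  case: (ltnP rB b2) => c2.
    by right; apply: (gIp HSB NY _ ESB EY); [apply: (crossI HSB NY ESB EY); lia|fin].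
  by right; apply: (g1p NY EY); fin.
- left; apply: (gIp NX HSB _ EX ESB); last by fin.
  by rewrite crossesC; apply: (crossI HSB NX ESB EX); lia.
- by right; apply: (gDp HSB NX _ ESB EX); [apply: (crossI HSB NX ESB EX); lia|fin].
Qed.

Lemma core_diff X Y : N X -> N Y -> crosses X Y ->
  outside_in a (X :\: Y) = interval n lA rA -> concl lA rA lB rB.
Proof.
move=> NX NY cr HI.
case: (Oint NX) => a1 [a2 [vX EX]]; case: (Oint NY) => b1 [b2 [vY EY]].
rewrite (@O_D _ _ _ _ Ha X Y (N_uoa NY)) EX EY in HI.
have E : forall m, m < n -> ((a1 <= m < a2) && ~~ (b1 <= m < b2)) = (lA <= m < rA).
  by move=> m Hm; have := f_equal (fun T : {set 'I_n} => Ordinal Hm \in T) HI; rewrite !inE andbC.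
move: (vA) (vB) (vX) (vY); rewrite /valid_lr => va vb vx vy.
have F : (a1 = lA /\ a2 = rA) \/ (lA = b2 /\ rA = a2 /\ b1 <= a1 /\ a1 < b2) \/
   (lA = a1 /\ rA = b1 /\ b1 < a2 /\ a2 <= b2).
  have d1 : a1 <= lA /\ ~~ (b1 <= lA < b2) by have := E lA ltac:(lia); lia.
  have d2 : rA <= a2 /\ ~~ (b1 <= rA - 1 < b2) by have := E (rA - 1) ltac:(lia); lia.
  have d3 : a1 < lA -> b1 <= lA - 1 < b2.
    by move=> hh; have := E (lA - 1) ltac:(lia); lia.
  have d4 : a1 < lA -> b1 <= a1 < b2.
    by move=> hh; have := E a1 ltac:(lia); lia.
  have d5 : rA < a2 -> b1 <= rA < b2.
    by move=> hh; have := E rA ltac:(lia); lia.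
  have d6 : rA < a2 -> b1 <= a2 - 1 < b2.
    by move=> hh; have := E (a2 - 1) ltac:(lia); lia.
  clear E; lia.
case: F => [[f1 f2]|[[f1 [f2 [f3 f4]]]|[f1 [f2 [f3 f4]]]]].
- by apply: (case1 NX); rewrite EX f1 f2.
- exact: (diffB NX NY cr EX EY).
- exact: (diffC NX NY cr EX EY).
Qed.
End Core.

Lemma toiset (T : {set 'I_n}) : (exists l r, valid_lr n l r /\ T = interval n l r) ->
  good T -> special_iset w k C a T.
Proof.
case=> l [r [v ->]] [S [h1 h2 h3 h4]]; exists l, r; split => //; split => //.
by exists S; split.
Qed.

Lemma main_in lA rA lB rB : special_interval w k C a lA rA -> NMI w k C a lB rB ->
  crosses (interval n lA rA) (interval n lB rB) ->
  (special_iset w k C a (interval n lA rA :&: interval n lB rB) \/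
   special_iset w k C a (interval n lA rA :\: interval n lB rB)) /\
  (special_iset w k C a (interval n lA rA :|: interval n lB rB) \/
   special_iset w k C a (interval n lB rB :\: interval n lA rA)).
Proof.
case=> vA [SA [[c5 uA OA] spA]]; case=> vB [SB [[c5B uB OB] nSB]] cr.
have NSB : N SB by split => //; exists lB, rB; split.
have Hor : (lA < lB /\ lB < rA /\ rA < rB) \/ (lB < lA /\ lA < rB /\ rB < rA).
  case/and4P: cr => /set0Pn [i hi] /set0Pn [j hj] /set0Pn [l hl] _.
  move: hi hj hl; rewrite !inE => /andP [/andP [i1 i2] /andP [i3 i4]].
  move=> /andP [j1 /andP [j2 j3]] /andP [l1 /andP [l2 l3]].
  move: vA vB j1 l1; rewrite /valid_lr; lia.
have Hc : concl lA rA lB rB.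
  case: spA => [n40|[A' [B' [iA iB /andP [nA nB] crAB eq]]]].
    by apply: (case1 NSB OB vA vB Hor (L := SA)) => //; split => //; exists lA, rA; split.
  have NA : N A' by split.
  have NB : N B' by split.
  case: eq => [e|[e|[e|e]]]; subst SA.
  - exact: (core_inter NSB OB vA vB Hor NA NB OA).
  - exact: (core_union NSB OB vA vB Hor NA NB crAB OA).
  - exact: (core_diff NSB OB vA vB Hor NA NB crAB OA).
  - by apply: (core_diff NSB OB vA vB Hor NB NA _ OA); rewrite crossesC.
case: Hc => H1 H2; split.
- case: H1 => G; [left; apply: (toiset _ G)|right; apply: (toiset _ G)];
  move: (vA) (vB); rewrite /valid_lr => va vb; case: Hor => h.
  + by exists lB, rA; split; [rewrite /valid_lr; lia|apply/setP; fin].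
  + by exists lA, rB; split; [rewrite /valid_lr; lia|apply/setP; fin].
  + by exists lA, lB; split; [rewrite /valid_lr; lia|apply/setP; fin].
  + by exists rB, rA; split; [rewrite /valid_lr; lia|apply/setP; fin].
- case: H2 => G; [left; apply: (toiset _ G)|right; apply: (toiset _ G)];
  move: (vA) (vB); rewrite /valid_lr => va vb; case: Hor => h.
  + by exists lA, rB; split; [rewrite /valid_lr; lia|apply/setP; fin].
  + by exists lB, rA; split; [rewrite /valid_lr; lia|apply/setP; fin].
  + by exists rA, rB; split; [rewrite /valid_lr; lia|apply/setP; fin].
  + by exists lB, lA; split; [rewrite /valid_lr; lia|apply/setP; fin].
Qed.
End Main.

Theorem mainTheorem3
  (V : finType) (w : V -> V -> nat) (k : nat) (C : {set {set V}})
  (n : nat) (D : {set 'I_n * 'I_n}) (pos : {set V} -> R * R) (a : 'I_n -> {set V})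
  (lA rA lB rB : nat) :
  (forall u v, w u v = w v u) ->
  is_min_cut_value w k ->
  is_nmc_component w k 1 40 C ->
  more_than_one_cut C ->
  polygon_rep C D pos a ->
  special_interval w k C a lA rA ->
  NMI w k C a lB rB ->
  crosses (interval n lA rA) (interval n lB rB) ->
  (special_iset w k C a (interval n lA rA :&: interval n lB rB) \/
   special_iset w k C a (interval n lA rA :\: interval n lB rB)) /\
  (special_iset w k C a (interval n lA rA :|: interval n lB rB) \/
   special_iset w k C a (interval n lB rB :\: interval n lA rA)).
Proof.
move=> wsym Hk _ _ [hn _ _ [Ha _] _].
have Hn : 0 < n by apply: leq_trans hn.
exact: (main_in wsym Hk Ha Hn).
Qed.
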